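(* Let $P_1:\mathbb R^n\to\mathbb R$ be convex and continuous, $A_1\in\mathbb R^{q_1\times n}$, $l_1:\mathbb R^{q_1}\to\mathbb R$ strictly convex with $\{x:l_1(A_1x)\le0\}\neq\emptyset$, and $F(x):=P_1(x)+\delta_{\{l_1(A_1\cdot)\le0\}}(x)$. Suppose (i) $\inf P_1<\inf F$, and (ii) there is a Lagrange multiplier $\bar\lambda\ge0$ for $\min_xF(x)$ such that $x\mapsto P_1(x)+\bar\lambda\,l_1(A_1x)$ is a KL function with exponent $\alpha\in(0,1)$. Then $F$ is a KL function with exponent $\alpha$.
   Context: $\delta_C$ denotes the indicator function of $C$ ($0$ on $C$, $+\infty$ outside); $\partial$ is the convex subdifferential. A Lagrange multiplier for $\min_xF(x)$ is a number $\bar\lambda\ge0$ with $\inf_{x}\{P_1(x)+\bar\lambda l_1(A_1x)\}=\inf_xF(x)>-\infty$. KL function with exponent $\alpha\in[0,1)$: a proper closed $h$ such that at every $\hat x\in{\rm dom}\,\partial h$ there exist $a\in(0,\infty]$, a neighborhood $V$ of $\hat x$ and $a_0>0$ with $a_0(1-\alpha)(h(x)-h(\hat x))^{-\alpha}\,{\rm dist}(0,\partial h(x))\ge1$ for all $x\in V$ with $h(\hat x)<h(x)<h(\hat x)+a$. *)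

(* Defs.v *)
From mathcomp Require Import all_boot.
From Stdlib Require Import Reals.
Set Implicit Arguments.
Unset Strict Implicit.
Local Open Scope R_scope.

Definition vec (n : nat) := 'I_n -> R.
Definition mat (q n : nat) := 'I_q -> 'I_n -> R.

Definition vsum {n} (f : 'I_n -> R) : R := \big[Rplus/R0]_(i < n) f i.
Definition dot {n} (x y : vec n) : R := vsum (fun i => x i * y i).
Definition vnorm {n} (x : vec n) : R := sqrt (dot x x).
Definition vsub {n} (x y : vec n) : vec n := fun i => x i - y i.
Definition vcomb {n} (t : R) (x y : vec n) : vec n := fun i => t * x i + (1 - t) * y i.
Definition matvec {q n} (A : mat q n) (x : vec n) : vec q :=
  fun i => vsum (fun j => A i j * x j).

Inductive ER := Fin (r : R) | PInf.
Definition ERlt (a b : ER) : Prop :=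
  match a, b with
  | Fin x, Fin y => x < y
  | Fin _, PInf => True
  | PInf, _ => False
  end.
Definition ERadd (a b : ER) : ER :=
  match a, b with Fin x, Fin y => Fin (x + y) | _, _ => PInf end.

Definition convex {n} (f : vec n -> R) : Prop :=
  forall x y t, 0 <= t <= 1 -> f (vcomb t x y) <= t * f x + (1 - t) * f y.
Definition strictly_convex {n} (f : vec n -> R) : Prop :=
  forall x y t, x <> y -> 0 < t < 1 -> f (vcomb t x y) < t * f x + (1 - t) * f y.
Definition continuous_vec {n} (f : vec n -> R) : Prop :=
  forall x eps, 0 < eps -> exists del, 0 < del /\
    forall y, vnorm (vsub y x) < del -> Rabs (f y - f x) < eps.

(* proper: not identically +oo (values -oo are excluded by the type) *)
Definition proper {n} (h : vec n -> ER) : Prop := exists x r, h x = Fin r.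
(* closed = lower semicontinuous *)
Definition lsc {n} (h : vec n -> ER) : Prop :=
  forall x (t : R), ERlt (Fin t) (h x) -> exists del, 0 < del /\
    forall y, vnorm (vsub y x) < del -> ERlt (Fin t) (h y).

Definition subdiff {n} (h : vec n -> ER) (x v : vec n) : Prop :=
  exists hx, h x = Fin hx /\
    forall y, match h y with
              | Fin hy => hy >= hx + dot v (vsub y x)
              | PInf => True
              end.
Definition in_dom_subdiff {n} (h : vec n -> ER) (x : vec n) : Prop :=
  exists v, subdiff h x v.

(* The inequality
   a0 (1-alpha) (h x - h xh)^(-alpha) dist(0, ∂h(x)) >= 1 is written out as
   "for every v ∈ ∂h(x), a0 (1-alpha) (h x - h xh)^(-alpha) |v| >= 1"
   (dist(0,∂h(x)) = inf_{v ∈ ∂h(x)} |v|, = +oo if ∂h(x) is empty);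
   the neighborhood V is taken to be an open ball (WLOG). *)
Definition KL_exp {n} (h : vec n -> ER) (alpha : R) : Prop :=
  0 <= alpha < 1 /\ proper h /\ lsc h /\
  forall xh, in_dom_subdiff h xh ->
    exists hxh, h xh = Fin hxh /\
    exists (a : ER) (eps a0 : R), ERlt (Fin 0) a /\ 0 < eps /\ 0 < a0 /\
      forall x hx, vnorm (vsub x xh) < eps -> h x = Fin hx ->
        hxh < hx -> ERlt (Fin hx) (ERadd (Fin hxh) a) ->
        forall v, subdiff h x v ->
          a0 * (1 - alpha) * Rpower (hx - hxh) (- alpha) * vnorm v >= 1.

Definition is_inf (S : R -> Prop) (m : R) : Prop :=
  (forall s, S s -> m <= s) /\ (forall b, (forall s, S s -> b <= s) -> b <= m).

Definition Fobj {n q} (P1 : vec n -> R) (A1 : mat q n) (l1 : vec q -> R) : vec n -> ER :=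
  fun x => if Rle_dec (l1 (matvec A1 x)) 0 then Fin (P1 x) else PInf.

Definition Lagr {n q} (P1 : vec n -> R) (A1 : mat q n) (l1 : vec q -> R) (lam : R)
  : vec n -> ER := fun x => Fin (P1 x + lam * l1 (matvec A1 x)).

Definition lagrange_multiplier {n q} (P1 : vec n -> R) (A1 : mat q n) (l1 : vec q -> R)
  (lam : R) : Prop :=
  0 <= lam /\ exists m,
    is_inf (fun s => exists x, s = P1 x + lam * l1 (matvec A1 x)) m /\
    is_inf (fun s => exists x, l1 (matvec A1 x) <= 0 /\ s = P1 x) m.

(* Main.v *)
Require Import Defs.
From HB Require Import structures.
From mathcomp Require Import all_boot.
From Stdlib Require Import Reals Lra Lia Classical FunctionalExtensionality ClassicalEpsilon.
From mathcomp Require Import zify.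
Set Implicit Arguments.
Local Open Scope R_scope.

Lemma vsum_add n (f g : 'I_n -> R) : vsum (fun i => f i + g i) = vsum f + vsum g.
Proof. rewrite /vsum. elim/big_rec3: _ => //=; first lra. move=> i a b c _ ->; lra. Qed.
Lemma vsum_scal n c (f : 'I_n -> R) : vsum (fun i => c * f i) = c * vsum f.
Proof. rewrite /vsum. elim/big_rec2: _ => //=; first lra. move=> i a b _ ->; lra. Qed.
Lemma vsum_ext n (f g : 'I_n -> R) : (forall i, f i = g i) -> vsum f = vsum g.
Proof. move=> H; rewrite /vsum; apply: eq_bigr => i _; exact: H. Qed.
Lemma vsum_le n (f g : 'I_n -> R) : (forall i, f i <= g i) -> vsum f <= vsum g.
Proof. move=> H; rewrite /vsum. elim/big_rec2: _ => //=; first lra. move=> i a b _ h; have := H i; lra. Qed.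
Lemma vsum_const n c : vsum (fun _ : 'I_n => c) = INR n * c.
Proof. rewrite /vsum big_const_ord. elim: n => [|n IH] /=; first lra.
  rewrite IH; case: n {IH} => [|n] /=; lra. Qed.

HB.instance Definition _ := Monoid.isComLaw.Build R R0 Rplus (fun a b c => esym (Rplus_assoc a b c)) Rplus_comm Rplus_0_l.

Lemma vsum_ge1 n (f : 'I_n -> R) i : (forall j, 0 <= f j) -> f i <= vsum f.
Proof. move=> H; rewrite /vsum (bigD1 i) //=.
  have : 0 <= \big[Rplus/R0]_(j < n | j != i) f j.
  { elim/big_rec: _ => //=; first lra. move=> j a _ h; have := H j; lra. }
  move=> h; rewrite -{1}(Rplus_0_r (f i)); apply: Rplus_le_compat_l; exact: h. Qed.

Ltac vsolve := rewrite /dot -?vsum_scal -?vsum_add; apply: vsum_ext => i; rewrite /vsub /vcomb; ring.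
Ltac vsolveF := rewrite /dot -?vsum_scal -?vsum_add; apply: vsum_ext => i; rewrite /vsub /vcomb; field.

Lemma dot_ge0 n (w : vec n) : 0 <= dot w w.
Proof. rewrite /dot. have -> : 0 = vsum (fun _ : 'I_n => 0) by rewrite vsum_const; ring.
  apply: vsum_le => i; nra. Qed.
Lemma vnorm_ge0 n (w : vec n) : 0 <= vnorm w.
Proof. exact: sqrt_pos. Qed.
Lemma vnorm_sq n (w : vec n) : vnorm w * vnorm w = dot w w.
Proof. apply: sqrt_sqrt; exact: dot_ge0. Qed.
Lemma sqrt_le_of_sq a B : 0 <= B -> a <= B * B -> sqrt a <= B.
Proof. move=> hB h. case: (Rle_lt_dec a 0) => ha.
  - rewrite sqrt_neg_0 //.
  - rewrite -(sqrt_square B) //. apply: sqrt_le_1_alt; lra. Qed.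
Lemma vnorm_le_of n (w : vec n) B : 0 <= B -> dot w w <= B * B -> vnorm w <= B.
Proof. exact: sqrt_le_of_sq. Qed.
Lemma vnorm_ext n (u w : vec n) : (forall i, u i = w i) -> vnorm u = vnorm w.
Proof. move=> H; rewrite /vnorm /dot; congr sqrt; apply: vsum_ext => i; rewrite H //. Qed.

Lemma CS n (x y : vec n) : dot x y <= vnorm x * vnorm y.
Proof.
  have q : forall t, 0 <= dot x x + (-2 * t) * dot x y + (t * t) * dot y y.
  { move=> t. have -> : dot x x + (-2 * t) * dot x y + (t * t) * dot y y =
       dot (fun i => x i - t * y i) (fun i => x i - t * y i) by vsolve.
    exact: dot_ge0. }
  have hx := vnorm_ge0 x; have hy := vnorm_ge0 y.
  case: (Rle_lt_dec (dot x y) 0) => hc; first nra.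
  have hB := dot_ge0 y. have hA := dot_ge0 x.
  case: (Rle_lt_or_eq_dec _ _ hB) => hB'.
  - have := q (dot x y / dot y y). move=> h.
    have h2 : dot x y * dot x y <= dot x x * dot y y.
    { have e : dot x x + -2 * (dot x y / dot y y) * dot x y +
         dot x y / dot y y * (dot x y / dot y y) * dot y y =
         dot x x - dot x y * dot x y / dot y y by field; lra.
      rewrite e in h. have : dot x y * dot x y / dot y y <= dot x x by lra.
      move=> h3. have := Rmult_le_compat_r (dot y y) _ _ (Rlt_le _ _ hB') h3.
      have -> : dot x y * dot x y / dot y y * dot y y = dot x y * dot x y by field; lra.
      lra. }
    rewrite -(vnorm_sq x) -(vnorm_sq y) in h2.
    case: (Rle_lt_dec (dot x y) (vnorm x * vnorm y)) => // hlt.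
    have hp : 0 <= vnorm x * vnorm y by nra.
    have := Rmult_le_0_lt_compat _ _ _ _ hp hp hlt hlt. nra.
  - have := q ((dot x x + 1) / (2 * dot x y)). rewrite -hB'.
    have -> : dot x x + -2 * ((dot x x + 1) / (2 * dot x y)) * dot x y = -1 by field; lra.
    lra.
Qed.

Lemma CS_neg n (x y : vec n) : - (vnorm x * vnorm y) <= dot x y.
Proof. have := CS (fun i => - x i) y.
  have -> : vnorm (fun i => - x i) = vnorm x by rewrite /vnorm; congr sqrt; vsolve.
  have -> : dot (fun i => - x i) y = (-1) * dot x y by vsolve.
  lra. Qed.

Lemma vnorm_add n (u w : vec n) : vnorm (fun i => u i + w i) <= vnorm u + vnorm w.
Proof. apply: vnorm_le_of; first by have := vnorm_ge0 u; have := vnorm_ge0 w; lra.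
  have -> : dot (fun i => u i + w i) (fun i => u i + w i) = dot u u + 2 * dot u w + dot w w by vsolve.
  have := CS u w. rewrite -(vnorm_sq u) -(vnorm_sq w). lra. Qed.

Lemma vnorm_tri n (a b c : vec n) : vnorm (vsub a c) <= vnorm (vsub a b) + vnorm (vsub b c).
Proof. rewrite (@vnorm_ext n _ (fun i => vsub a b i + vsub b c i)); first exact: vnorm_add.
  move=> i; rewrite /vsub; ring. Qed.
Lemma vnorm_sym n (a b : vec n) : vnorm (vsub a b) = vnorm (vsub b a).
Proof. rewrite /vnorm; congr sqrt; vsolve. Qed.
Lemma vnorm_self n (a : vec n) : vnorm (vsub a a) = 0.
Proof. rewrite /vnorm. have -> : dot (vsub a a) (vsub a a) = 0 * dot a a by vsolve. rewrite Rmult_0_l; exact: sqrt_0. Qed.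
Lemma vnorm_coord n (w : vec n) i : Rabs (w i) <= vnorm w.
Proof. rewrite -(sqrt_Rsqr_abs (w i)). apply: sqrt_le_1_alt. rewrite /Rsqr /dot.
  apply: (@vsum_ge1 n (fun j => w j * w j)) => j; nra. Qed.

Lemma inv_small d : 0 < d -> exists N : nat, forall k : nat, (N <= k)%nat -> / (INR k + 1) < d.
Proof. move=> hd. have [N hN] := INR_unbounded (/ d). exists N => k hk.
  have : INR N <= INR k by apply: le_INR; apply/leP.
  move=> h. have hk1 : 0 < INR k + 1 by have := pos_INR k; lra.
  rewrite -(Rinv_inv d). apply: Rinv_lt_contravar; last lra.
  apply: Rmult_lt_0_compat => //; apply: Rinv_0_lt_compat => //. Qed.

Lemma geo_small q c : 0 <= q < 1 -> 0 <= c -> forall d, 0 < d -> exists N : nat, forall k : nat, (N <= k)%nat -> c * q ^ k < d.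
Proof. move=> hq hc d hd. have hq' : Rabs q < 1 by rewrite Rabs_pos_eq; lra.
  have [N hN] := pow_lt_1_zero q hq' (d / (c + 1)) ltac:(apply: Rdiv_lt_0_compat; lra).
  exists N => k hk. have := hN k ltac:(lia). rewrite Rabs_pos_eq; last by apply: pow_le; lra.
  move=> h. have hp : 0 <= q ^ k by apply: pow_le; lra.
  have : (c + 1) * q ^ k < d.
  { have := Rmult_lt_compat_l (c+1) _ _ ltac:(lra) h. have -> : (c + 1) * (d / (c + 1)) = d by field; lra. done. }
  nra. Qed.

Lemma vec_complete n (z : nat -> vec n) (b : nat -> R) :
  (forall j k, (k <= j)%nat -> vnorm (vsub (z j) (z k)) <= b k) ->
  (forall d, 0 < d -> exists N : nat, forall k : nat, (N <= k)%nat -> b k < d) ->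
  exists y : vec n, forall k, vnorm (vsub y (z k)) <= sqrt (INR n) * b k.
Proof.
  move=> Hz Hb.
  have Hc : forall i, Cauchy_crit (fun k => z k i).
  { move=> i e he. have [N hN] := Hb e he. exists N => p r hp hr.
    rewrite /R_dist. case: (leqP r p) => h.
    - have h1 : Rabs (z p i - z r i) <= vnorm (vsub (z p) (z r)) := vnorm_coord (vsub (z p) (z r)) i.
      have := Hz p r h. have := hN r ltac:(lia). lra.
    - have h1 : Rabs (z r i - z p i) <= vnorm (vsub (z r) (z p)) := vnorm_coord (vsub (z r) (z p)) i. rewrite Rabs_minus_sym.
      have := Hz r p (ltnW h). have := hN p ltac:(lia). lra. }
  exists (fun i => proj1_sig (R_complete _ (Hc i))) => k.
  have hbk : 0 <= b k. { have := Hz k k (leqnn k). rewrite vnorm_self. lra. }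
  have coord : forall i, Rabs (proj1_sig (R_complete _ (Hc i)) - z k i) <= b k.
  { move=> i. case: (R_complete _ (Hc i)) => l hl /=.
    case: (Rle_lt_dec (Rabs (l - z k i)) (b k)) => // hlt. exfalso.
    have [N hN] := hl (Rabs (l - z k i) - b k) ltac:(lra).
    have := hN (maxn N k) ltac:(lia).
    have h2 : Rabs (z (maxn N k) i - z k i) <= vnorm (vsub (z (maxn N k)) (z k)) := vnorm_coord (vsub (z (maxn N k)) (z k)) i.
    have h1 := Hz (maxn N k) k (leq_maxr N k). rewrite /R_dist.
    move=> h3.
    have := Rabs_triang (l - z (maxn N k) i) (z (maxn N k) i - z k i).
    have -> : l - z (maxn N k) i + (z (maxn N k) i - z k i) = l - z k i by ring.
    rewrite Rabs_minus_sym in h3. lra. }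
  apply: vnorm_le_of.
  - apply: Rmult_le_pos => //; exact: sqrt_pos.
  - have -> : sqrt (INR n) * b k * (sqrt (INR n) * b k) = INR n * (b k * b k).
    { have := sqrt_sqrt (INR n) (pos_INR n). nra. }
    rewrite -vsum_const /dot. apply: vsum_le => i. have := coord i. rewrite /vsub.
    set a := sval _. rewrite /Rabs. case: Rcase_abs => hs h; nra.
Qed.

Definition lscR n (L : vec n -> R) := forall x t, t < L x -> exists del, 0 < del /\
  forall y, vnorm (vsub y x) < del -> t < L y.

Lemma sqrt_lt_of_sq a d : 0 < d -> a < d * d -> sqrt a < d.
Proof. move=> hd h. case: (Rle_lt_dec a 0) => ha; first by rewrite sqrt_neg_0.
  rewrite -(sqrt_square d); last lra. apply: sqrt_lt_1_alt; lra. Qed.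

Lemma nsq_lower n (a b : vec n) : dot b b - 2 * (vnorm b * vnorm (vsub a b)) <= dot a a.
Proof. have e : dot a a = dot b b + 2 * dot b (vsub a b) + dot (vsub a b) (vsub a b) by vsolve.
  have := CS_neg b (vsub a b). have := dot_ge0 (vsub a b). lra. Qed.


Lemma prox n (L : vec n -> R) m : convex L -> lscR L -> (forall z, m <= L z) ->
  forall x tau, 0 < tau -> exists y : vec n, forall z,
    L y + dot (fun i => / tau * (x i - y i)) (vsub z y) <= L z.
Proof.
  move=> Lc Ll Lm x tau htau.
  pose c0 := / (2 * tau). have hc0 : 0 < c0 by apply: Rinv_0_lt_compat; lra.
  pose Phi := fun z => L z + c0 * dot (vsub z x) (vsub z x).
  have Phim : forall z, m <= Phi z.
  { move=> z. have := Lm z. have := dot_ge0 (vsub z x). rewrite /Phi. nra. }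
  pose E := fun r => exists z, r = - Phi z.
  have bnd : bound E. { exists (- m) => r [z ->]. have := Phim z. lra. }
  have ne : exists r, E r by exists (- Phi x); exists x.
  case: (completeness E bnd ne) => U [hU1 hU2].
  pose I := - U.
  have hI : forall z, I <= Phi z. { move=> z. have := hU1 (- Phi z) ltac:(by exists z). rewrite /I; lra. }
  have happ : forall e, 0 < e -> exists z, Phi z < I + e.
  { move=> e he. apply: NNPP => H. have ub : is_upper_bound E (U - e).
    { move=> r [z ->]. case: (Rle_lt_dec (I + e) (Phi z)) => h; first by rewrite /I in h; lra.
      exfalso; apply: H; by exists z. }
    have := hU2 _ ub. lra. }
  have hs : forall k : nat, exists z, Phi z < I + / (INR k + 1).
  { move=> k; apply: happ; apply: Rinv_0_lt_compat; have := pos_INR k; lra. }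
  pose zs := fun k => proj1_sig (constructive_indefinite_description _ (hs k)).
  have hzs : forall k, Phi (zs k) < I + / (INR k + 1) := fun k => proj2_sig (constructive_indefinite_description _ (hs k)).
  pose b := fun k : nat => sqrt (8 * tau * / (INR k + 1)).
  have Hz : forall j k, (k <= j)%nat -> vnorm (vsub (zs j) (zs k)) <= b k.
  { move=> j k hkj. set a := zs j. set c := zs k.
    pose mid := vcomb (/2) a c.
    have hLm : L mid <= /2 * L a + (1 - /2) * L c by apply: Lc; lra.
    have eD : c0 * dot (vsub mid x) (vsub mid x) = /2 * (c0 * dot (vsub a x) (vsub a x)) +
       /2 * (c0 * dot (vsub c x) (vsub c x)) - /4 * (c0 * dot (vsub a c) (vsub a c)).
    { have -> : /2 * (c0 * dot (vsub a x) (vsub a x)) + /2 * (c0 * dot (vsub c x) (vsub c x))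
         - /4 * (c0 * dot (vsub a c) (vsub a c)) = c0 * (/2 * dot (vsub a x) (vsub a x) +
         /2 * dot (vsub c x) (vsub c x) + (- /4) * dot (vsub a c) (vsub a c)) by ring.
      congr (_ * _). rewrite /mid. vsolveF. }
    have h1 := hI mid. have h2 := hzs j. have h3 := hzs k.
    have hjk : / (INR j + 1) <= / (INR k + 1).
    { apply: Rinv_le_contravar; first by have := pos_INR k; lra.
      have : INR k <= INR j by apply: le_INR; apply/leP. lra. }
    rewrite /Phi in h1 h2 h3. rewrite eD in h1. rewrite -/a -/c in h2 h3.
    have hac : c0 * dot (vsub a c) (vsub a c) < 4 * / (INR k + 1) by lra.
    have hk1 : 0 < / (INR k + 1) by apply: Rinv_0_lt_compat; have := pos_INR k; lra.
    apply: sqrt_le_1_alt.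
    have -> : dot (vsub a c) (vsub a c) = (c0 * dot (vsub a c) (vsub a c)) * (2 * tau) by rewrite /c0; field; lra.
    nra. }
  have Hb : forall d, 0 < d -> exists N : nat, forall k : nat, (N <= k)%nat -> b k < d.
  { move=> d hd. have [N hN] := @inv_small (d * d / (8 * tau)) ltac:(apply: Rdiv_lt_0_compat; nra).
    exists N => k hk. apply: sqrt_lt_of_sq => //. have := hN k hk.
    have hk1 : 0 < / (INR k + 1) by apply: Rinv_0_lt_compat; have := pos_INR k; lra.
    move=> h. have := Rmult_lt_compat_l (8 * tau) _ _ ltac:(lra) h.
    have -> : 8 * tau * (d * d / (8 * tau)) = d * d by field; lra. done. }
  have [y hy] := @vec_complete n zs b Hz Hb.
  have Hg : forall d, 0 < d -> exists N : nat, forall k : nat, (N <= k)%nat -> sqrt (INR n) * b k < d.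
  { move=> d hd. have hsn := sqrt_pos (INR n).
    have [N hN] := Hb (d / (sqrt (INR n) + 1)) ltac:(apply: Rdiv_lt_0_compat; lra).
    exists N => k hk. have := hN k hk. move=> h.
    have hb0 : 0 <= b k by apply: sqrt_pos.
    have := Rmult_le_compat_r (b k) _ _ hb0 (Rlt_le _ _ (Rlt_n_Sn (sqrt (INR n)))) .
    have := Rmult_lt_compat_l (sqrt (INR n) + 1) _ _ ltac:(lra) h.
    have -> : (sqrt (INR n) + 1) * (d / (sqrt (INR n) + 1)) = d by field; lra.
    rewrite /Rsqr. nra. }
  have ymin : Phi y <= I.
  { case: (Rle_lt_dec (Phi y) I) => // hlt. exfalso.
    pose eta := (Phi y - I) / 4. have heta : 0 < eta by rewrite /eta; lra.
    have [del [hdel Hdel]] := Ll y (L y - eta) ltac:(lra).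
    have hyx := vnorm_ge0 (vsub y x).
    have [N1 hN1] := Hg del hdel.
    have [N2 hN2] := Hg (eta / (2 * c0 * (vnorm (vsub y x) + 1))) ltac:(apply: Rdiv_lt_0_compat; nra).
    have [N3 hN3] := @inv_small eta heta.
    pose k := maxn N1 (maxn N2 N3).
    have k1 := hN1 k ltac:(rewrite /k; lia). have k2 := hN2 k ltac:(rewrite /k; lia).
    have k3 := hN3 k ltac:(rewrite /k; lia).
    have hyk := hy k. rewrite vnorm_sym in hyk.
    have hLk := Hdel (zs k) ltac:(lra).
    have hnl := nsq_lower (vsub (zs k) x) (vsub y x).
    have ee : vnorm (vsub (vsub (zs k) x) (vsub y x)) = vnorm (vsub (zs k) y).
    { apply: vnorm_ext => i; rewrite /vsub; ring. }
    rewrite ee in hnl.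
    have hP : c0 * (2 * (vnorm (vsub y x) * vnorm (vsub (zs k) y))) <= eta.
    { have hz0 := vnorm_ge0 (vsub (zs k) y).
      have hbd : vnorm (vsub (zs k) y) <= eta / (2 * c0 * (vnorm (vsub y x) + 1)) by lra.
      have := Rmult_le_compat_l (2 * c0 * (vnorm (vsub y x) + 1)) _ _ ltac:(nra) hbd.
      have -> : 2 * c0 * (vnorm (vsub y x) + 1) * (eta / (2 * c0 * (vnorm (vsub y x) + 1))) = eta by field; nra.
      nra. }
    have h4 := hzs k. rewrite /Phi in h4.
    have := Rmult_le_compat_l c0 _ _ (Rlt_le _ _ hc0) hnl.
    rewrite Rmult_minus_distr_l. move=> h5.
    have : Phi y - 2 * eta < I + eta by rewrite /Phi; lra.
    rewrite /eta; lra. }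
  exists y => z.
  pose D := dot (vsub y x) (vsub z y). pose N := dot (vsub z y) (vsub z y).
  have hN0 : 0 <= N := dot_ge0 _.
  have eu : dot (fun i => / tau * (x i - y i)) (vsub z y) = (-2 * c0) * D.
  { have -> : -2 * c0 = - / tau by rewrite /c0; field; lra. rewrite /D. vsolve. }
  rewrite eu.
  have key : forall t, 0 < t <= 1 -> 0 <= t * (L z - L y + 2 * c0 * D + c0 * t * N).
  { move=> t ht. have hw := Lc z y t ltac:(lra).
    have := ymin. have := hI (vcomb t z y). rewrite /Phi.
    have -> : dot (vsub (vcomb t z y) x) (vsub (vcomb t z y) x) =
      dot (vsub y x) (vsub y x) + (2 * t) * D + (t * t) * N by rewrite /D /N; vsolve.
    move=> h1 h2. have : 0 <= t * (L z - L y) + c0 * ((2 * t) * D + (t * t) * N) by nra.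
    move=> h3. have -> : t * (L z - L y + 2 * c0 * D + c0 * t * N) = t * (L z - L y) + c0 * ((2 * t) * D + (t * t) * N) by ring.
    done. }
  case: (Rle_lt_dec 0 (L z - L y + 2 * c0 * D)) => hG; first lra.
  exfalso. set G := L z - L y + 2 * c0 * D in hG.
  pose t := Rmin 1 (- G / (c0 * N + 1)).
  have hcN : 0 <= c0 * N by nra.
  have htpos : 0 < t by apply: Rmin_glb_lt; [lra | apply: Rdiv_lt_0_compat; lra].
  have ht1 : t <= 1 := Rmin_l _ _.
  have ht2 : t <= - G / (c0 * N + 1) := Rmin_r _ _.
  have := key t (conj htpos ht1). move=> hk.
  have hk' : 0 <= G + c0 * t * N.
  { have := Rmult_le_compat_l (/ t) _ _ (Rlt_le _ _ (Rinv_0_lt_compat _ htpos)) hk.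
    rewrite Rmult_0_r -Rmult_assoc Rinv_l; last lra. rewrite /G; lra. }
  have : t * (c0 * N + 1) <= - G.
  { have := Rmult_le_compat_r (c0 * N + 1) _ _ ltac:(lra) ht2.
    have -> : - G / (c0 * N + 1) * (c0 * N + 1) = - G by field; lra. done. }
  nra.
Qed.

Lemma pow_le1 x k : 0 <= x <= 1 -> x ^ k <= 1.
Proof. move=> hx; elim: k => [|k IH] /=; first lra. have := pow_le x k ltac:(lra). nra. Qed.

Lemma Rpower_one y : Rpower 1 y = 1.
Proof. by rewrite /Rpower ln_1 Rmult_0_r exp_0. Qed.
Lemma rp_pos x y : 0 < Rpower x y.
Proof. exact: exp_pos. Qed.
Lemma rp_inv_cancel z a : 0 < z -> 0 < a -> Rpower (Rpower z (/ a)) a = z.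
Proof. move=> hz ha. rewrite Rpower_mult Rinv_l; last lra. exact: Rpower_1. Qed.

Lemma EB n (L : vec n -> R) m xh alpha eps A c :
  0 < alpha < 1 -> convex L -> lscR L -> (forall x, m <= L x) -> L xh = m ->
  0 < eps -> 0 < A -> 0 < c ->
  (forall x u, vnorm (vsub x xh) < eps -> m < L x -> L x < m + A ->
     (forall z, L x + dot u (vsub z x) <= L z) -> c * Rpower (L x - m) alpha <= vnorm u) ->
  exists e' a' C, 0 < e' /\ 0 < a' /\ 0 < C /\ forall x, vnorm (vsub x xh) < e' ->
    m < L x -> L x < m + a' ->
    exists p, L p <= m /\ vnorm (vsub x p) <= C * Rpower (L x - m) (1 - alpha).
Proof.
  move=> ha Lc Ll Lm Lxh heps hA hc KL.
  pose K := 2 / c. have hK : 0 < K by rewrite /K; apply: Rdiv_lt_0_compat; lra.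
  have h1a : 0 < 1 - alpha by lra.
  pose A1 := Rmin A (Rpower (c * eps / 4) (/ (1 - alpha))).
  have hA1 : 0 < A1 by apply: Rmin_glb_lt => //; exact: rp_pos.
  have hA1A : A1 <= A := Rmin_l _ _.
  have hA1p : Rpower A1 (1 - alpha) <= c * eps / 4.
  { rewrite -(@rp_inv_cancel (c * eps / 4) (1 - alpha)) //; last nra.
    apply: Rle_Rpower_l; first lra. split => //. exact: Rmin_r. }
  pose G := fun x => vnorm (vsub x xh) < eps / 2 /\ L x - m < A1.
  have claim : forall x, G x -> exists y, L y - m <= (L x - m) / 2 /\
      forall bb, 0 < bb -> L x - m <= bb -> vnorm (vsub x y) <= K * Rpower bb (1 - alpha).
  { move=> x [Gx1 Gx2]. have hr0 := Lm x.
    case: (Rle_lt_dec (L x - m) 0) => hr.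
    - exists x; split; first lra. move=> bb hbb _. rewrite vnorm_self.
      have := rp_pos bb (1 - alpha). nra.
    set r := L x - m in hr Gx2 *.
    pose rho := r / 2. have hrho : 0 < rho by rewrite /rho; lra.
    pose w := Rpower rho (1 - alpha). pose e := Rpower rho alpha.
    have hw : 0 < w := rp_pos _ _. have he : 0 < e := rp_pos _ _.
    have hwe : w * e = rho.
    { rewrite /w /e -Rpower_plus. have -> : 1 - alpha + alpha = 1 by ring. exact: Rpower_1. }
    pose tau := w / (e * c * c).
    have htau : 0 < tau by rewrite /tau; apply: Rdiv_lt_0_compat => //; do 2 apply: Rmult_lt_0_compat => //.
    have [y hy] := prox Lc Ll Lm x htau.
    set u := fun i => / tau * (x i - y i) in hy.
    pose d2 := dot (vsub x y) (vsub x y). have hd2 : 0 <= d2 := dot_ge0 _.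
    have eu : dot u (vsub x y) = / tau * d2 by rewrite /d2 /u; vsolve.
    have hyx := hy x. rewrite eu in hyx.
    have hLy := Lm y.
    have hd2t : d2 <= tau * (L x - L y).
    { have := Rmult_le_compat_l tau _ _ (Rlt_le _ _ htau) (Rplus_le_reg_l (L y) _ _ (Rle_trans _ _ _ hyx (Req_le _ _ (esym (Rplus_minus (L y) (L x)))))) .
      rewrite -Rmult_assoc Rinv_r; lra. }
    have htr : tau * rho = w * w / (c * c) by rewrite /tau -hwe; field; lra.
    have hdist : vnorm (vsub x y) <= K * w.
    { apply: vnorm_le_of; first nra. rewrite /K.
      have : d2 <= 2 * (w * w / (c * c)).
      { rewrite -htr /rho. have : tau * (L x - L y) <= tau * r by apply: Rmult_le_compat_l; [lra | rewrite /r; lra]. lra. }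
      have -> : 2 / c * w * (2 / c * w) = 4 * (w * w / (c * c)) by field; lra.
      have : 0 <= w * w / (c * c) by apply: Rlt_le; apply: Rdiv_lt_0_compat; nra.
      rewrite /d2; lra. }
    have hwA : w <= c * eps / 4.
    { apply: Rle_trans hA1p. apply: Rle_Rpower_l; first lra. rewrite /rho; lra. }
    have hs : L y - m <= rho.
    { case: (Rle_lt_dec (L y - m) rho) => // hs. exfalso.
      have hyxh : vnorm (vsub y xh) < eps.
      { have := vnorm_tri y x xh. rewrite (vnorm_sym y x).
        have : K * w <= eps / 2.
        { rewrite /K. have := Rmult_le_compat_l (2 / c) _ _ ltac:(apply: Rlt_le; apply: Rdiv_lt_0_compat; lra) hwA.
          have -> : 2 / c * (c * eps / 4) = eps / 2 by field; lra. done. }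
        lra. }
      have hLyx : L y <= L x.
      { have : 0 <= / tau * d2 by apply: Rmult_le_pos => //; apply: Rlt_le; apply: Rinv_0_lt_compat. lra. }
      have hk := KL y u hyxh ltac:(lra) ltac:(rewrite /r in Gx2; lra) hy.
      have hes : e <= Rpower (L y - m) alpha by apply: Rle_Rpower_l; lra.
      have hce : c * e <= vnorm u by nra.
      have huu : c * e * (c * e) <= dot u u.
      { rewrite -vnorm_sq. have hce0 : 0 <= c * e by nra. apply: Rmult_le_compat => //. }
      have euu : dot u u = (/ tau * / tau) * d2 by rewrite /u /d2; vsolve.
      have hd2' : tau * tau * (c * e * (c * e)) <= d2.
      { rewrite euu in huu. have := Rmult_le_compat_l (tau * tau) _ _ ltac:(nra) huu.
        have -> : tau * tau * (/ tau * / tau * d2) = d2 by field; lra. done. }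
      have : tau * (c * e * (c * e)) < rho.
      { have h2 : tau * tau * (c * e * (c * e)) < tau * rho.
        { have : tau * (L x - L y) < tau * rho by apply: Rmult_lt_compat_l => //; rewrite /rho /r in hs *; lra. lra. }
        have := Rmult_lt_compat_l (/ tau) _ _ (Rinv_0_lt_compat _ htau) h2.
        have -> : / tau * (tau * tau * (c * e * (c * e))) = tau * (c * e * (c * e)) by field; lra.
        have -> : / tau * (tau * rho) = rho by field; lra. done. }
      have -> : tau * (c * e * (c * e)) = w * e by rewrite /tau; field; lra.
      lra. }
    exists y; split; first by rewrite /rho in hs; lra.
    move=> bb hbb hrb. apply: Rle_trans hdist _. apply: Rmult_le_compat_l; first lra.
    apply: Rle_Rpower_l; first lra. rewrite /rho; lra. }
  have hf : forall x, exists y, G x -> L y - m <= (L x - m) / 2 /\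
      forall bb, 0 < bb -> L x - m <= bb -> vnorm (vsub x y) <= K * Rpower bb (1 - alpha).
  { move=> x. case: (classic (G x)) => hG.
    - have [y hy] := claim x hG. by exists y.
    - by exists x. }
  pose f := fun x => proj1_sig (constructive_indefinite_description _ (hf x)).
  have hfs : forall x, G x -> L (f x) - m <= (L x - m) / 2 /\
      forall bb, 0 < bb -> L x - m <= bb -> vnorm (vsub x (f x)) <= K * Rpower bb (1 - alpha).
  { move=> x. exact: (proj2_sig (constructive_indefinite_description _ (hf x))). }
  pose q := Rpower (/ 2) (1 - alpha).
  have hq0 : 0 < q := rp_pos _ _.
  have hq1 : q < 1.
  { apply: (Rlt_le_trans _ (Rpower 1 (1 - alpha))); last by rewrite Rpower_one; lra. rewrite /q. apply: Rlt_Rpower_l; lra. }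
  pose z0 := eps * (1 - q) / (4 * K).
  have hz0 : 0 < z0 by rewrite /z0; apply: Rdiv_lt_0_compat; nra.
  pose a' := Rmin A1 (Rpower z0 (/ (1 - alpha))).
  have ha' : 0 < a' by apply: Rmin_glb_lt => //; exact: rp_pos.
  have ha'1 : a' <= A1 := Rmin_l _ _.
  have ha'2 : a' <= Rpower z0 (/ (1 - alpha)) := Rmin_r _ _.
  have hsn := sqrt_pos (INR n).
  exists (eps / 4), a', (sqrt (INR n) * K / (1 - q) + 1).
  split; first lra. split => //. split.
  { have : 0 <= sqrt (INR n) * K / (1 - q) by apply: Rmult_le_pos; [nra | apply: Rlt_le; apply: Rinv_0_lt_compat; lra].
    lra. }
  move=> x0 hx0 hm0 ha0.
  pose r0 := L x0 - m. have hr0 : 0 < r0 by rewrite /r0; lra.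
  pose B0 := K * Rpower r0 (1 - alpha).
  have hB0 : 0 < B0 by rewrite /B0; apply: Rmult_lt_0_compat => //; exact: rp_pos.
  have hB0s : B0 / (1 - q) < eps / 4.
  { have hlt : Rpower r0 (1 - alpha) < z0.
    { rewrite -(@rp_inv_cancel z0 (1 - alpha)) //. apply: Rlt_Rpower_l => //. rewrite /r0; lra. }
    have : B0 < K * z0 by rewrite /B0; apply: Rmult_lt_compat_l.
    have -> : K * z0 = eps / 4 * (1 - q) by rewrite /z0; field; lra.
    move=> h. apply: (Rmult_lt_reg_r (1 - q)); first lra.
    have -> : B0 / (1 - q) * (1 - q) = B0 by field; lra. done. }
  pose xs := fun k => iter k f x0.
  have hxsS : forall k, xs k.+1 = f (xs k) by move=> k; rewrite /xs iterS.
  have rpk : forall k, Rpower (r0 * (/ 2) ^ k) (1 - alpha) = Rpower r0 (1 - alpha) * q ^ k.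
  { elim=> [|k IH]; first by rewrite /= Rmult_1_r Rmult_1_r.
    have -> : r0 * (/ 2) ^ k.+1 = (r0 * (/ 2) ^ k) * / 2 by rewrite /=; ring.
    rewrite -Rpower_mult_distr; first by rewrite IH /q /=; ring.
    - apply: Rmult_lt_0_compat => //; apply: pow_lt; lra.
    - lra. }
  have hpw : forall k, 0 < (/ 2) ^ k by move=> k; apply: pow_lt; lra.
  have hqk : forall k, 0 <= q ^ k by move=> k; apply: pow_le; lra.
  have Inv : forall k, L (xs k) - m <= r0 * (/ 2) ^ k /\
      vnorm (vsub (xs k) x0) <= B0 * (1 - q ^ k) / (1 - q).
  { elim=> [|k [IH1 IH2]].
    - rewrite /xs /= vnorm_self /r0. split; first lra.
      have -> : B0 * (1 - 1) / (1 - q) = 0 by field; lra. lra.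
    - have hG : G (xs k).
      { split.
        + have := vnorm_tri (xs k) x0 xh.
          have : B0 * (1 - q ^ k) / (1 - q) <= B0 / (1 - q).
          { apply: Rmult_le_compat_r; first by apply: Rlt_le; apply: Rinv_0_lt_compat; lra.
            have := hqk k. nra. }
          lra.
        + have : r0 * (/ 2) ^ k <= r0.
          { have : (/ 2) ^ k <= 1 by apply: pow_le1; lra. have := hpw k. nra. }
          rewrite /r0 in IH1 *. lra. }
      have [hf1 hf2] := hfs _ hG.
      have hstep := hf2 (r0 * (/ 2) ^ k) ltac:(apply: Rmult_lt_0_compat => //) IH1.
      rewrite rpk -/B0 -Rmult_assoc -/B0 in hstep. rewrite -hxsS in hf1 hstep.
      split.
      + have -> : (/ 2) ^ k.+1 = / 2 * (/ 2) ^ k by []. lra.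
      + have := vnorm_tri (xs k.+1) (xs k) x0. rewrite (vnorm_sym (xs k.+1) (xs k)).
        have -> : B0 * (1 - q ^ k.+1) / (1 - q) = B0 * q ^ k + B0 * (1 - q ^ k) / (1 - q).
        { rewrite /=. field. lra. }
        lra. }
  have Step : forall k, vnorm (vsub (xs k.+1) (xs k)) <= B0 * q ^ k.
  { move=> k. have [IH1 IH2] := Inv k.
    have hG : G (xs k).
    { split.
      + have := vnorm_tri (xs k) x0 xh.
        have : B0 * (1 - q ^ k) / (1 - q) <= B0 / (1 - q).
        { apply: Rmult_le_compat_r; first by apply: Rlt_le; apply: Rinv_0_lt_compat; lra.
          have := hqk k. nra. }
        lra.
      + have : r0 * (/ 2) ^ k <= r0.
        { have : (/ 2) ^ k <= 1 by apply: pow_le1; lra. have := hpw k. nra. }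
        rewrite /r0 in IH1 *. lra. }
    have [_ hf2] := hfs _ hG.
    have hstep := hf2 (r0 * (/ 2) ^ k) ltac:(apply: Rmult_lt_0_compat => //) IH1.
    rewrite rpk -Rmult_assoc -/B0 -hxsS in hstep. by rewrite vnorm_sym. }
  have Cau : forall k i, vnorm (vsub (xs (k + i)%nat) (xs k)) <= B0 * (q ^ k - q ^ (k + i)) / (1 - q).
  { move=> k. elim=> [|i IH].
    - rewrite addn0 vnorm_self. have -> : B0 * (q ^ k - q ^ k) / (1 - q) = 0 by field; lra. lra.
    - rewrite addnS. have := vnorm_tri (xs (S (k + i)%nat)) (xs (k + i)%nat) (xs k).
      have := Step (k + i)%nat.
      have -> : B0 * (q ^ k - q ^ (S (k + i)%nat)) / (1 - q) = B0 * q ^ (k + i) + B0 * (q ^ k - q ^ (k + i)) / (1 - q).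
      { rewrite /=. field. lra. }
      lra. }
  pose bq := fun k => B0 / (1 - q) * q ^ k.
  have Hz : forall j k, (k <= j)%nat -> vnorm (vsub (xs j) (xs k)) <= bq k.
  { move=> j k hkj. rewrite -(subnKC hkj). apply: Rle_trans (Cau _ _) _.
    rewrite /bq. have := hqk ((k + (j - k))%nat)%nat.
    have -> : B0 * (q ^ k - q ^ ((k + (j - k))%nat)) / (1 - q) = B0 / (1 - q) * q ^ k - B0 / (1 - q) * q ^ ((k + (j - k))%nat) by field; lra.
    have : 0 <= B0 / (1 - q) by apply: Rlt_le; apply: Rdiv_lt_0_compat; lra.
    nra. }
  have Hb : forall d, 0 < d -> exists N : nat, forall k : nat, (N <= k)%nat -> bq k < d.
  { move=> d hd. apply: (@geo_small q (B0 / (1 - q))) => //; first lra.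
    apply: Rlt_le; apply: Rdiv_lt_0_compat; lra. }
  have [p hp] := @vec_complete n xs bq Hz Hb.
  exists p. split.
  { case: (Rle_lt_dec (L p) m) => // hlt. exfalso.
    pose t := (m + L p) / 2.
    have [del [hdel Hdel]] := Ll p t ltac:(rewrite /t; lra).
    have [N1 hN1] := @geo_small q (sqrt (INR n) * (B0 / (1 - q))) ltac:(lra)
      ltac:(apply: Rmult_le_pos => //; apply: Rlt_le; apply: Rdiv_lt_0_compat; lra) del hdel.
    have [N2 hN2] := @geo_small (/ 2) r0 ltac:(lra) ltac:(lra) (t - m) ltac:(rewrite /t; lra).
    pose k := maxn N1 N2.
    have k1 := hN1 k ltac:(rewrite /k; lia). have k2 := hN2 k ltac:(rewrite /k; lia).
    have hpk := hp k. rewrite /bq -Rmult_assoc in hpk.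
    have := Hdel (xs k) ltac:(rewrite vnorm_sym; lra).
    have [I1 _] := Inv k. lra. }
  have hp0 := hp 0%nat. rewrite /bq /= Rmult_1_r vnorm_sym in hp0.
  change (xs 0%nat) with x0 in hp0.
  apply: Rle_trans hp0 _. rewrite /B0.
  have hR := rp_pos (L x0 - m) (1 - alpha). rewrite -/r0.
  have -> : sqrt (INR n) * (K * Rpower r0 (1 - alpha) / (1 - q)) =
    (sqrt (INR n) * K / (1 - q)) * Rpower r0 (1 - alpha) by field; lra.
  rewrite /r0 in hR *. nra.
Qed.

Lemma matvec_comb q n (A : mat q n) t x y : matvec A (vcomb t x y) = vcomb t (matvec A x) (matvec A y).
Proof. apply: functional_extensionality => i. rewrite /matvec /vcomb -!vsum_scal -vsum_add.
  apply: vsum_ext => j; ring. Qed.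

Lemma sconv_conv q (l : vec q -> R) : strictly_convex l -> convex l.
Proof. move=> hs x y t ht. case: (classic (x = y)) => [<-|hxy].
  - have -> : vcomb t x x = x by apply: functional_extensionality => i; rewrite /vcomb; ring. lra.
  - case: (Req_dec t 0) => [->|h0].
    + have -> : vcomb 0 x y = y by apply: functional_extensionality => i; rewrite /vcomb; ring. lra.
    case: (Req_dec t 1) => [->|h1].
    + have -> : vcomb 1 x y = x by apply: functional_extensionality => i; rewrite /vcomb; ring. lra.
    have := hs x y t hxy ltac:(lra). lra. Qed.

Lemma dot0l n (w : vec n) : dot (fun _ => 0) w = 0.
Proof. have -> : dot (fun _ => 0) w = 0 * dot w w by vsolve. ring. Qed.

Lemma rp_ge1 s a : 0 < s < 1 -> 0 < a -> 1 <= Rpower s (- a).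
Proof. move=> hs ha. rewrite Rpower_Ropp.
  have h1 : Rpower s a <= 1 by rewrite -(Rpower_one a); apply: Rle_Rpower_l; lra.
  have h0 := rp_pos s a. rewrite -Rinv_1. apply: Rinv_le_contravar => //. Qed.

Theorem mainTheorem14 (n q1 : nat) (P1 : vec n -> R) (A1 : mat q1 n)
  (l1 : vec q1 -> R) (alpha : R) :
  convex P1 -> continuous_vec P1 ->
  strictly_convex l1 ->
  (exists x, l1 (matvec A1 x) <= 0) ->
  (* (i) inf P1 < inf F *)
  (exists c, (exists x0, P1 x0 < c) /\
             forall x, l1 (matvec A1 x) <= 0 -> c <= P1 x) ->
  (* (ii) *)
  0 < alpha < 1 ->
  (exists lam, lagrange_multiplier P1 A1 l1 lam /\ KL_exp (Lagr P1 A1 l1 lam) alpha) ->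
  KL_exp (Fobj P1 A1 l1) alpha.
Proof.
  move=> cvxP contP sconv [xf hxf] [c [[x0 hx0] hc]] ha
    [lam [[hlam [m [[inf1a inf1b] [inf2a inf2b]]]] [_ [_ [lscL klL]]]]].
  pose g := fun x => l1 (matvec A1 x).
  pose L := fun x => P1 x + lam * g x.
  have Lm : forall x, m <= L x by move=> x; apply: inf1a; exists x.
  have Fm : forall x, g x <= 0 -> m <= P1 x by move=> x hx; apply: inf2a; exists x.
  have mF : forall b, (forall x, g x <= 0 -> b <= P1 x) -> b <= m.
  { move=> b hb; apply: inf2b => s [x [hx ->]]; exact: hb. }
  have hlam0 : 0 < lam.
  { case: (Rle_lt_or_eq_dec _ _ hlam) => // h0. exfalso.
    have := Lm x0. rewrite /L -h0. have := mF c hc. lra. }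
  have cvxg : convex g.
  { move=> x y t ht. rewrite /g matvec_comb. exact: sconv_conv. }
  have cvxL : convex L.
  { move=> x y t ht. rewrite /L. have := cvxP x y t ht. have := cvxg x y t ht.
    move=> h1 h2. have := Rmult_le_compat_l lam _ _ hlam h1. lra. }
  have lscRL : lscR L.
  { move=> x t ht. have [del [hdel H]] := lscL x t ht. by exists del; split => // y hy; exact: H. }
  have Fobj_feas : forall x, g x <= 0 -> Fobj P1 A1 l1 x = Fin (P1 x).
  { move=> x hx. rewrite /Fobj. case: Rle_dec => //. }
  have Fobj_inf : forall x hx, Fobj P1 A1 l1 x = Fin hx -> g x <= 0 /\ hx = P1 x.
  { move=> x hx. rewrite /Fobj. case: Rle_dec => // h [<-]. done. }
  split; first lra. split.
  { exists xf, (P1 xf). exact: Fobj_feas. }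
  split.
  { move=> x t. rewrite /Fobj. case: Rle_dec => hx /= ht.
    - have [del [hdel H]] := contP x (P1 x - t) ltac:(lra).
      exists del; split => // y hy. case: Rle_dec => //= _.
      have := H y hy. move=> h. have := Rabs_def2 _ _ h. lra.
    - have hgx : 0 < g x by rewrite /g; lra.
      have [d1 [hd1 H1]] := lscRL x (L x - lam * g x / 2) ltac:(nra).
      have [d2 [hd2 H2]] := contP x (lam * g x / 4) ltac:(nra).
      exists (Rmin d1 d2); split; first by apply: Rmin_glb_lt.
      move=> y hy. case: Rle_dec => //= hgy. exfalso.
      have := H1 y ltac:(have := Rmin_l d1 d2; lra).
      have := H2 y ltac:(have := Rmin_r d1 d2; lra). move=> h2 h1.
      have := Rabs_def2 _ _ h2. rewrite /L in h1 *. move=> [h3 h4].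
      have h5 : 0 < lam * g y by lra. rewrite /g in h5. nra. }
  move=> xh [v [hx0' [hFxh _]]].
  have [hgxh ehx] := Fobj_inf _ _ hFxh.
  exists (P1 xh); split; first exact: Fobj_feas.
  case: (classic (exists y, g y <= 0 /\ P1 y < P1 xh)) => [[y [hgy hPy]] | hno].
  - pose D := vnorm (vsub y xh). pose d := P1 xh - P1 y.
    have hd : 0 < d by rewrite /d; lra. have hD := vnorm_ge0 (vsub y xh).
    exists (Fin 1), 1, ((D + 1) / (d * (1 - alpha))).
    split; first by rewrite /=; lra. split; first lra. split.
    { apply: Rdiv_lt_0_compat; first by rewrite /D; lra. nra. }
    move=> x hx hxn hFx hlt hlt2 v' [hx' [hFx' hv']].
    have [hgx ex] := Fobj_inf _ _ hFx. rewrite hFx in hFx'. case: hFx' => ehx'.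
    subst hx hx'. rewrite /= in hlt2.
    have := hv' y. rewrite Fobj_feas // => hvy.
    have := CS_neg v' (vsub y x). move=> hcs.
    have hyx : vnorm (vsub y x) < D + 1.
    { have := vnorm_tri y xh x. rewrite (vnorm_sym xh x). rewrite /D; lra. }
    have hprod : d < vnorm v' * vnorm (vsub y x) by rewrite /d; lra.
    have hv0 := vnorm_ge0 v'.
    have hR := rp_ge1 (s := P1 x - P1 xh) (a := alpha) ltac:(lra) ltac:(lra).
    have e1 : (D + 1) / (d * (1 - alpha)) * (1 - alpha) = (D + 1) / d by field; lra.
    rewrite e1.
    have h2 : 1 <= (D + 1) / d * vnorm v'.
    { have : d <= (D + 1) * vnorm v' by have := vnorm_ge0 (vsub y x); nra.
      move=> h. apply: (Rmult_le_reg_l d) => //.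
      have -> : d * ((D + 1) / d * vnorm v') = (D + 1) * vnorm v' by field; lra. lra. }
    have h3 : 0 <= (D + 1) / d by apply: Rlt_le; apply: Rdiv_lt_0_compat; rewrite /D; lra.
    apply: Rle_ge. have := Rmult_le_compat_r ((D + 1) / d * vnorm v') _ _ ltac:(lra) hR. nra.
  - have hmin : forall y, g y <= 0 -> P1 xh <= P1 y.
    { move=> y hy. case: (Rle_lt_dec (P1 xh) (P1 y)) => // h. exfalso; apply: hno; by exists y. }
    have hPm : P1 xh = m by have := Fm xh hgxh; have := mF _ hmin; lra.
    have hLxh : L xh = m by have := Lm xh; rewrite /L; nra.
    have hg0 : g xh = 0 by rewrite /L in hLxh; nra.
    have hdom : in_dom_subdiff (Lagr P1 A1 l1 lam) xh.
    { exists (fun _ => 0), (L xh); split => // y /=. rewrite dot0l. have := Lm y. rewrite /L /g in hLxh *. lra. }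
    have [hxh' [hLag [aL [epsL [a0L [haL [hepsL [ha0L KLL]]]]]]]] := klL xh hdom.
    have ehxh : hxh' = m by move: hLag; rewrite /Lagr => -[<-]; exact: hLxh.
    subst hxh'.
    pose A := match aL with Fin r => r | PInf => 1 end.
    have hA : 0 < A.
    { rewrite /A. destruct aL as [r|]; simpl in haL |- *; lra. }
    have hc0 : 0 < / (a0L * (1 - alpha)) by apply: Rinv_0_lt_compat; nra.
    have KLr : forall x u, vnorm (vsub x xh) < epsL -> m < L x -> L x < m + A ->
      (forall z, L x + dot u (vsub z x) <= L z) ->
      / (a0L * (1 - alpha)) * Rpower (L x - m) alpha <= vnorm u.
    { move=> x u hxn h1 h2 hu.
      have := KLL x (L x) hxn erefl h1.
      have h2' : ERlt (Fin (L x)) (ERadd (Fin m) aL).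
      { rewrite /A in h2. destruct aL as [r|]; simpl; [lra | exact I]. }
      move=> /(_ h2' u) H. have := H ltac:(exists (L x); split => // y /=; have := hu y; rewrite /L /g; lra).
      rewrite Rpower_Ropp. set R := Rpower (L x - m) alpha. have hR : 0 < R := rp_pos _ _.
      move=> h. apply: (Rmult_le_reg_l (a0L * (1 - alpha))); first nra.
      rewrite -Rmult_assoc Rinv_r; last nra. rewrite Rmult_1_l.
      apply: (Rmult_le_reg_r (/ R)); first exact: Rinv_0_lt_compat.
      rewrite Rinv_r; last lra. lra. }
    have [e' [a' [C [he' [ha' [hC EBp]]]]]] :=
      @EB n L m xh alpha epsL A _ ha cvxL lscRL Lm hLxh hepsL hA hc0 KLr.
    have Sfeas : forall p, L p <= m -> g p <= 0 /\ P1 p = m.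
    { move=> p hp. have hLp : L p = m by have := Lm p; lra.
      case: (classic (matvec A1 p = matvec A1 xh)) => hA1.
      - have : g p = 0 by rewrite /g hA1; exact: hg0.
        move=> hgp0. split; first lra. rewrite /L hgp0 in hLp. lra.
      - exfalso. pose mid := vcomb (/ 2) p xh.
        have h1 := sconv _ _ (/ 2) hA1 ltac:(lra).
        rewrite -matvec_comb in h1. have h2 := cvxP p xh (/ 2) ltac:(lra).
        have := Lm mid. rewrite /L /g /mid. rewrite /L /g in hLp hLxh.
        have := Rmult_lt_compat_l lam _ _ hlam0 h1. lra. }
    exists (Fin a'), e', (C / (1 - alpha)).
    split; first by rewrite /=. split => //. split; first by apply: Rdiv_lt_0_compat; lra.
    move=> x hx hxn hFx hlt hlt2 v' [hx' [hFx' hv']].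
    have [hgx ex] := Fobj_inf _ _ hFx. rewrite hFx in hFx'. case: hFx' => ehx'.
    subst hx hx'. rewrite /= in hlt2. rewrite hPm in hlt hlt2 *.
    have hLxP : L x <= P1 x by rewrite /L; nra.
    have hLx : m < L x.
    { case: (Rle_lt_dec (L x) m) => // h. have [_ hP] := Sfeas x h. lra. }
    have [p [hp1 hp2]] := EBp x hxn hLx ltac:(lra).
    have [hgp hPp] := Sfeas p hp1.
    have := hv' p. rewrite Fobj_feas // => hvp.
    have hcs := CS_neg v' (vsub p x). rewrite (vnorm_sym p x) in hcs.
    set s := P1 x - m.
    have hs : 0 < s by rewrite /s; lra.
    have hRle : Rpower (L x - m) (1 - alpha) <= Rpower s (1 - alpha).
    { apply: Rle_Rpower_l; first lra. rewrite /s; lra. }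
    have hv0 := vnorm_ge0 v'.
    have key : s <= vnorm v' * C * Rpower s (1 - alpha).
    { have : s <= vnorm v' * vnorm (vsub x p) by rewrite /s; lra.
      have := Rmult_le_compat_l (vnorm v') _ _ hv0 hp2.
      have := Rmult_le_compat_l (vnorm v' * C) _ _ ltac:(nra) hRle. nra. }
    have e1 : Rpower s (1 - alpha) = s * Rpower s (- alpha).
    { rewrite Rpower_plus Rpower_1 //. }
    rewrite e1 in key.
    have e2 : C / (1 - alpha) * (1 - alpha) = C by field; lra.
    rewrite e2. apply: Rle_ge.
    apply: (Rmult_le_reg_l s) => //. nra.
Qed.
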